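(* Let $K$ be a global function field, fix a prime $\infty$ of $K$, let $\mathcal{O}$ be the ring of elements of $K$ regular at every prime other than $\infty$, and let $\mathbb{F}_q$ be the full constant field of $K$ (so $\mathcal{O}^*=\mathbb{F}_q^*$). If $\phi\in\mathcal{O}[X]$ is a polynomial of degree $d\geqslant 2$ with leading coefficient in $\mathcal{O}^*$, then \[\#\mathrm{Per}(\phi,K)\leqslant (q-1)(d-1)+1.\]
   Context: A global function field is a finite extension of $\mathbb{F}_p(t)$; the full constant field is the algebraic closure of $\mathbb{F}_p$ in $K$. $\mathrm{Per}(\phi,K)$ is the set of $x\in K$ with $\phi^n(x)=x$ for some $n\geqslant1$ ($\phi$ viewed as a map $K\to K$). *)

(* Defs.v *)
From HB Require Import structures.
From mathcomp Require Import all_boot all_order all_algebra all_field.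
Set Implicit Arguments. Unset Strict Implicit. Unset Printing Implicit Defensive.
Import GRing.Theory.
Local Open Scope ring_scope.

Definition Fpt (p : nat) : fieldType := {fraction {poly 'F_p}}.

(* A global function field is modelled as K : fieldExtType (Fpt p), i.e. a
   finite(-dimensional) field extension of F_p(t). *)

(* A prime (place) of K, given by its valuation ring: a proper subring V of K
   such that for every nonzero x, x \in V or x^-1 \in V. *)
Definition is_prime_of (K : fieldType) (V : K -> Prop) : Prop :=
  [/\ V 1,
      (forall x y, V x -> V y -> V (x - y)),
      (forall x y, V x -> V y -> V (x * y)),
      (exists x, ~ V x) &
      (forall x, x != 0 -> V x \/ V x^-1)].

Definition same_prime (K : fieldType) (V W : K -> Prop) : Prop :=
  forall x, V x <-> W x.

Definition ring_O (K : fieldType) (Vinf : K -> Prop) (x : K) : Prop :=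
  forall V, is_prime_of V -> ~ same_prime V Vinf -> V x.

(* Elements of K algebraic over the prime field F_p = {n%:R}. *)
Definition is_constant (K : fieldType) (x : K) : Prop :=
  exists P : {poly K}, P \is monic /\
    (forall i, exists n : nat, P`_i = n%:R) /\ root P x.

Definition is_periodic (K : nzRingType) (phi : {poly K}) (x : K) : Prop :=
  exists n : nat, (0 < n)%N /\ iter n (fun y => phi.[y]) x = x.

(* Main.v *)
Require Import Defs.
From mathcomp Require Import all_boot all_order all_algebra all_field.
From mathcomp Require Import ring zify.
From mathcomp Require Import classical_sets.
From Stdlib Require Import Classical.
Set Implicit Arguments. Unset Strict Implicit. Unset Printing Implicit Defensive.
Import GRing.Theory.
Local Open Scope ring_scope.


Definition subring (K : fieldType) (A : K -> Prop) :=
  [/\ A 1, forall x y, A x -> A y -> A (x - y) & forall x y, A x -> A y -> A (x*y)].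

Section Sub.
Variables (K : fieldType) (A : K -> Prop) (HA : subring A).

Lemma sr1 : A 1. Proof. by case: HA. Qed.
Lemma srB x y : A x -> A y -> A (x - y). Proof. by case: HA => _ H _; apply: H. Qed.
Lemma srM x y : A x -> A y -> A (x * y). Proof. by case: HA => _ _ H; apply: H. Qed.
Lemma sr0 : A 0. Proof. by rewrite -(subrr 1); apply: srB; apply: sr1. Qed.
Lemma srN x : A x -> A (- x). Proof. by move=> h; rewrite -sub0r; apply: srB => //; apply: sr0. Qed.
Lemma srD x y : A x -> A y -> A (x + y).
Proof. by move=> hx hy; rewrite -[y]opprK; apply: srB => //; apply: srN. Qed.
Lemma srX x n : A x -> A (x ^+ n).
Proof. by move=> hx; elim: n => [|n IH]; [rewrite expr0; exact: sr1|rewrite exprS; apply: srM]. Qed.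
Lemma srn n : A n%:R.
Proof. elim: n => [|n IH]; first exact: sr0. by rewrite -natr1; apply: srD => //; apply: sr1. Qed.
Lemma srz (k : int) : A k%:~R.
Proof. case: k => n; first exact: srn. by rewrite NegzE mulrNz; apply: srN; apply: srn. Qed.
Lemma srsum (I : Type) (r : seq I) (P : pred I) (F : I -> K) :
  (forall i, P i -> A (F i)) -> A (\sum_(i <- r | P i) F i).
Proof. by move=> h; apply: (big_ind A sr0 srD). Qed.

Lemma divdiff_eq (f : {poly K}) a b : f.[b] - f.[a] =
  (b - a) * \sum_(i < size f) f`_i * \sum_(j < i) b ^+ (i.-1 - j) * a ^+ j.
Proof.
rewrite !horner_coef -sumrB mulr_sumr; apply: eq_bigr => i _.
by rewrite -mulrBr subrXX mulrCA.
Qed.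

Lemma divdiff (f : {poly K}) a b : (forall i, A f`_i) -> A a -> A b -> a != b ->
  A ((f.[b] - f.[a]) / (b - a)).
Proof.
move=> Hf Ha Hb ab; rewrite divdiff_eq mulrC mulrA mulVf ?subr_eq0 1?eq_sym // mul1r.
apply: srsum => i _; apply: srM => //; apply: srsum => j _.
by apply: srM; apply: srX.
Qed.
End Sub.

Lemma prime_subring (K : fieldType) (V : K -> Prop) : is_prime_of V -> subring V.
Proof. by case=> ? ? ? _ _; split. Qed.


Section Val.
Variables (K : fieldType) (V : K -> Prop) (HV : is_prime_of V).
Let HS := prime_subring HV.

Lemma vdich x : x != 0 -> V x \/ V x^-1.
Proof. by case: HV => _ _ _ _; apply. Qed.

Lemma vnz x : ~ V x -> x != 0.
Proof. by move=> h; apply/eqP => e; apply: h; rewrite e; apply: (sr0 HS). Qed.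

Lemma vinv x : ~ V x -> V x^-1.
Proof. by move=> h; case: (vdich (vnz h)). Qed.

Lemma nz_1p w b : V w -> ~ V w^-1 -> V b -> 1 + w*b != 0.
Proof.
move=> Vw Nw Vb; apply/eqP=> e0.
have w0 : w != 0 by apply/eqP=> e; apply: Nw; rewrite e invr0; apply: (sr0 HS).
apply: Nw; have -> : w^-1 = - b.
  apply: (mulfI w0); rewrite divff // mulrN.
  by apply/eqP; rewrite -addr_eq0 e0.
exact: (srN HS).
Qed.

Lemma unit_1p w b : V w -> ~ V w^-1 -> V b -> V ((1 + w*b)^-1).
Proof.
move=> Vw Nw Vb.
have w0 : w != 0 by apply/eqP=> e; apply: Nw; rewrite e invr0; apply: (sr0 HS).
have [e0|e0] := eqVneq (1 + w*b) 0.
  exfalso; apply: Nw; have -> : w^-1 = - b.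
    apply: (mulfI w0); rewrite divff // mulrN.
    by apply/eqP; rewrite -addr_eq0 e0.
  exact: (srN HS).
have [wb0|wb0] := eqVneq (w*b) 0.
  by rewrite wb0 addr0 invr1; apply: (sr1 HS).
have b0 : b != 0 by apply: contraNneq wb0 => ->; rewrite mulr0.
have r0 : (1 + w*b) / (w*b) != 0 by rewrite mulf_neq0 // invr_eq0.
case: (vdich r0) => Vr.
  exfalso; apply: Nw.
  have -> : w^-1 = b * ((1 + w*b)/(w*b) - 1).
    by field; rewrite b0 w0.
  by apply: (srM HS) => //; apply: (srB HS) => //; apply: (sr1 HS).
have -> : (1 + w*b)^-1 = 1 - ((1 + w*b)/(w*b))^-1.
  by field; rewrite b0 w0 e0.
by apply: (srB HS) => //; apply: (sr1 HS).
Qed.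


Lemma key_phi (f : {poly K}) (d : nat) y : (2 <= d)%N -> size f = d.+1 ->
  (forall i, V f`_i) -> V (lead_coef f)^-1 -> ~ V y ->
  [/\ ~ V f.[y], V (y / f.[y]) & ~ V (f.[y] / y)].
Proof.
move=> Hd Hs Hc Hl Ny.
have y0 := vnz Ny.
set w := y^-1.
have Vw : V w := vinv Ny.
have Nw : ~ V w^-1 by rewrite /w invrK.
have fd0 : lead_coef f != 0 by rewrite lead_coef_eq0 -size_poly_eq0 Hs.
set T := \sum_(i < d) f`_i * w ^+ (d.-1 - i).
have VT : V T by apply: (srsum HS) => // i _; apply: (srM HS) => //; apply: (srX HS).
set u := lead_coef f + w * T.
have Hu : f.[y] = y ^+ d * u.
  rewrite horner_coef Hs big_ord_recr /= /u mulrDr addrC; congr (_ + _).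
    by rewrite mulrC lead_coefE Hs.
  rewrite /T mulr_sumr mulr_sumr; apply: eq_bigr => i _.
  have hi : (i <= d)%N by apply: ltnW.
  have e : y ^+ d * (w * w ^+ (d.-1 - i)) = y ^+ i.
    rewrite -exprS.
    have -> : (d.-1 - i).+1 = (d - i)%N by move: (ltn_ord i); lia.
    by rewrite -{1}(subnKC hi) exprD -mulrA -exprMn /w divff // expr1n mulr1.
  by rewrite -e; ring.
have Vl : V (lead_coef f) by rewrite lead_coefE.
have Vu : V u by apply: (srD HS) => //; apply: (srM HS).
have eu : u = lead_coef f * (1 + w * (T * (lead_coef f)^-1)).
  by rewrite /u; field.
have Vui : V u^-1.
  by rewrite eu invfM; apply: (srM HS) => //; apply: unit_1p => //; apply: (srM HS).
have u0 : u != 0 by rewrite eu mulf_neq0 //; apply: nz_1p => //; apply: (srM HS).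
have [d'' ed] : exists d'', d = d''.+2 by exists d.-2; lia.
rewrite ed in Hu.
have yd0 : forall n, y ^+ n != 0 by move=> n; rewrite expf_neq0.
have H2 : ~ V (f.[y] / y).
  rewrite Hu => h; apply: Ny.
  have -> : y = (y ^+ d''.+2 * u / y) * u^-1 * w ^+ d''.
    rewrite /w exprVn !exprSr; by field; rewrite yd0 u0 y0.
  by apply: (srM HS); [apply: (srM HS) | apply: (srX HS)].
split => //.
  by move=> h; apply: H2; apply: (srM HS).
rewrite Hu.
have -> : y / (y ^+ d''.+2 * u) = w ^+ d''.+1 * u^-1.
  rewrite /w exprVn !exprSr; by field; rewrite yd0 u0 y0.
by apply: (srM HS) => //; apply: (srX HS).
Qed.


Lemma per_in_V (f : {poly K}) (d : nat) x : (2 <= d)%N -> size f = d.+1 ->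
  (forall i, V f`_i) -> V (lead_coef f)^-1 -> is_periodic f x -> V x.
Proof.
move=> Hd Hs Hc Hl [n [n0 Hn]].
apply: Classical_Prop.NNPP => Nx.
have x0 := vnz Nx.
have H : forall k, let y := iter k.+1 (fun y => f.[y]) x in
    [/\ ~ V y, V (x / y) & ~ V (y / x)].
  elim=> [|k IH] /=.
    exact: key_phi Hd Hs Hc Hl Nx.
  move: IH => /=; set y := iter k _ _; set z := f.[y] => [[Ny Vxy Nyx]].
  have y0 := vnz Ny.
  have [Nz Vyz Nzy] := key_phi Hd Hs Hc Hl Ny.
  split => //.
    have -> : x / f.[z] = (x / z) * (z / f.[z]) by field; rewrite (vnz Nz) y0.
    exact: (srM HS).
  move=> h; apply: Nzy.
  have -> : f.[z] / z = (f.[z] / x) * (x / z) by field; rewrite x0 (vnz Ny).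
  exact: (srM HS).
case: n n0 Hn => [//|n] _ Hn.
have [_ _ N] := H n; apply: N; rewrite /= in Hn *; rewrite Hn divff //; exact: (sr1 HS).
Qed.

End Val.


Definition adj (K : fieldType) (B : K -> Prop) (z : K) : K -> Prop :=
  fun t => exists g : {poly K}, (forall i, B g`_i) /\ t = g.[z].

Definition Zr (K : fieldType) : K -> Prop := fun c => exists k : int, c = k%:~R.

Section Adj.
Variable K : fieldType.

Lemma Zr_subring : subring (@Zr K).
Proof.
split; first by exists 1.
  by move=> _ _ [a ->] [b ->]; exists (a - b); rewrite intrB.
by move=> _ _ [a ->] [b ->]; exists (a * b); rewrite intrM.
Qed.

Lemma Zr_sub (B : K -> Prop) : subring B -> forall c, Zr c -> B c.
Proof. by move=> HB _ [k ->]; apply: srz. Qed.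

Variables (B : K -> Prop) (HB : subring B).

Lemma adj_subring z : subring (adj B z).
Proof.
split.
- exists 1; split; last by rewrite hornerC.
  by move=> i; rewrite coefC; case: (i == 0%N); [apply: (sr1 HB)|apply: (sr0 HB)].
- move=> _ _ [g [Hg ->]] [h [Hh ->]]; exists (g - h); split; last by rewrite hornerD hornerN.
  by move=> i; rewrite coefB; apply: (srB HB).
- move=> _ _ [g [Hg ->]] [h [Hh ->]]; exists (g * h); split; last by rewrite hornerM.
  by move=> i; rewrite coefM; apply: (srsum HB) => j _; apply: (srM HB).
Qed.

Lemma adj_sub z c : B c -> adj B z c.
Proof.
move=> Bc; exists c%:P; split; last by rewrite hornerC.
by move=> i; rewrite coefC; case: (i == 0%N) => //; apply: (sr0 HB).
Qed.

Lemma adj_z z : adj B z z.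
Proof.
exists 'X; split; last by rewrite hornerX.
by move=> i; rewrite coefX; apply: (srn HB).
Qed.

Lemma pow_shift (w : K) i n : w != 0 -> (i <= n)%N -> w^-1 ^+ i * w ^+ n = w ^+ (n - i).
Proof.
move=> w0 h; rewrite -{1}(subnKC h) exprD mulrA exprVn mulVf ?mul1r //.
by rewrite expf_neq0.
Qed.

Lemma hornerV_scaled (g : {poly K}) w : (forall i, B g`_i) -> B w -> w != 0 ->
  B (g.[w^-1] * w ^+ size g).
Proof.
move=> Hg Bw w0; rewrite horner_coef mulr_suml; apply: (srsum HB) => i _.
rewrite -mulrA pow_shift //; last exact: ltnW.
by apply: (srM HB) => //; apply: (srX HB).
Qed.
End Adj.

Section Const.
Variables (K : fieldType) (p : nat) (p0 : (0 < p)%N) (hchar : (p%:R : K) = 0).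

Lemma int_nat (k : int) : exists n : nat, (k%:~R : K) = n%:R.
Proof.
case: k => n; first by exists n.
exists (p.-1 * n.+1)%N.
have hp : (p.-1)%:R = -1 :> K by rewrite -subn1 natrB // hchar sub0r.
by rewrite NegzE intrN natrM hp mulN1r.
Qed.

Lemma Zr_const (x : K) : x != 0 -> adj (@Zr K) x^-1 x -> is_constant x.
Proof.
move=> x0 [g [Hg ex]].
set n := size g.
set P : {poly K} := 'X^(n.+1) - \sum_(i < n) g`_i *: 'X^(n - i).
exists P; split; [|split].
- rewrite monicE /P lead_coefDl ?lead_coefXn // size_polyXn size_polyN ltnS.
  apply: (big_ind (fun q : {poly K} => size q <= n.+1)%N) => //; first by rewrite size_poly0.
    by move=> q1 q2 h1 h2; apply: leq_trans (size_polyD _ _) _; rewrite geq_max h1.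
  move=> i _; apply: leq_trans (size_scale_leq _ _) _; rewrite size_polyXn ltnS.
  exact: leq_subr.
- move=> i.
  have HZ := @Zr_subring K.
  have : Zr P`_i.
    rewrite /P coefB coefXn coef_sum; apply: (srB HZ); first exact: (srn HZ).
    apply: (srsum HZ) => j _; rewrite coefZ coefXn; apply: (srM HZ) => //; exact: (srn HZ).
  by case=> k ->; apply: int_nat.
- rewrite /root /P hornerD hornerN horner_sum hornerXn subr_eq0; apply/eqP.
  rewrite exprSr {2}ex horner_coef mulr_sumr; apply: eq_bigr => i _.
  by rewrite hornerZ hornerXn mulrCA [x ^+ n * _]mulrC pow_shift // ltnW.
Qed.
End Const.


Section Loc.
Variables (K : fieldType) (x : K) (x0 : x != 0) (V : K -> Prop) (HB : subring V).
Variables (Vy : V x^-1) (Nx : ~ V x) (Vmax : forall z, ~ V z -> adj V z x).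
Let y := x^-1.

Lemma y0 : y != 0. Proof. by rewrite invr_eq0. Qed.

Lemma cpow b : V b -> forall n, exists s, V s /\ (1 - y * b) ^+ n = 1 - y * s.
Proof.
move=> Vb; elim=> [|n [s [Vs e]]].
  by exists 0; split; [apply: (sr0 HB)|rewrite expr0 mulr0 subr0].
exists (s + b - y * s * b); split.
  by apply: (srB HB); [apply: (srD HB)|apply: (srM HB) => //; apply: (srM HB)].
by rewrite exprS e; ring.
Qed.

Lemma loc b : V b -> 1 - y * b != 0 /\ V ((1 - y * b)^-1).
Proof.
move=> Vb.
have c0 : 1 - y * b != 0.
  apply/eqP => e; apply: Nx; suff -> : x = b by [].
  have e' : y * b = 1 by apply/eqP; rewrite -subr_eq0 -oppr_eq0 opprB e.
  by rewrite -[x]invrK -/y -[y^-1]mulr1 -e' mulKf // y0.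
split => //.
apply: NNPP => Nc.
have [g [Hg ex]] := Vmax Nc.
have Vc : V (1 - y * b) by apply: (srB HB); [apply: (sr1 HB)|apply: (srM HB)].
have := hornerV_scaled HB Hg Vc c0.
rewrite -ex.
have [s [Vs ->]] := cpow Vb (size g).
move=> h; apply: Nx.
have -> : x = x * (1 - y * s) + s by rewrite /y; field.
exact: (srD HB).
Qed.

Definition II c := exists v, V v /\ c = y * v.
Definition IM z m t := exists a : nat -> K, (forall i, II (a i)) /\ t = \sum_(i < m) a i * z ^+ i.

Lemma II0 : II 0. Proof. by exists 0; split; [apply: (sr0 HB)|rewrite mulr0]. Qed.
Lemma IID a b : II a -> II b -> II (a + b).
Proof. by move=> [u [Vu ->]] [v [Vv ->]]; exists (u + v); split; [apply: (srD HB)|rewrite mulrDr]. Qed.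
Lemma IIV a v : II a -> V v -> II (v * a).
Proof. by move=> [u [Vu ->]] Vv; exists (v * u); split; [apply: (srM HB)|rewrite mulrCA]. Qed.
Lemma IIin a : II a -> V a.
Proof. by move=> [u [Vu ->]]; apply: (srM HB). Qed.

Lemma IM0 z m : IM z m 0.
Proof. exists (fun _ => 0); split => [i|]; first exact: II0. by rewrite big1 // => i _; rewrite mul0r. Qed.

Lemma IMD z m t1 t2 : IM z m t1 -> IM z m t2 -> IM z m (t1 + t2).
Proof.
move=> [a [Ha ->]] [b [Hb ->]]; exists (fun i => a i + b i); split.
  by move=> i; apply: IID.
by rewrite -big_split; apply: eq_bigr => i _; rewrite mulrDl.
Qed.

Lemma IMV z m v t : V v -> IM z m t -> IM z m (v * t).
Proof.
move=> Vv [a [Ha ->]]; exists (fun i => v * a i); split.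
  by move=> i; apply: IIV.
by rewrite mulr_sumr; apply: eq_bigr => i _; rewrite mulrA.
Qed.

Lemma IMmono z m c k : II c -> (k < m)%N -> IM z m (c * z ^+ k).
Proof.
move=> Ic km; exists (fun i => if i == k then c else 0); split.
  by move=> i; case: (i == k) => //; apply: II0.
rewrite (bigD1 (Ordinal km)) //= eqxx big1 ?addr0 // => j hj.
rewrite ifF ?mul0r //; apply: contraNF hj => /eqP e; apply/eqP/val_inj.
by rewrite /= e.
Qed.

Lemma IMsum z m n (F : 'I_n -> K) : (forall j, IM z m (F j)) -> IM z m (\sum_(j < n) F j).
Proof. by move=> h; apply: (big_ind (IM z m)) => //; [apply: IM0|apply: IMD]. Qed.

Lemma step z m' n' : z != 0 -> IM z m'.+1 1 -> IM z^-1 n'.+1 1 -> (n' <= m')%N -> IM z m' 1.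
Proof.
move=> z0 [a [Ha ea]] [b [Hb eb]] nm.
rewrite big_ord_recl expr0 mulr1 in eb.
move: eb; under eq_bigr => j _ do rewrite lift0; move=> eb.
have [v [Vv eb0]] := Hb 0%N.
have [c0 Vc] := loc Vv.
rewrite -eb0 in c0 Vc.
set S := \sum_(j < n') _ in eb.
have eS : S = 1 - b 0%N by rewrite eb; ring.
have ez : z ^+ m' = \sum_(j < n') ((1 - b 0%N)^-1 * b j.+1) * z ^+ (m' - j.+1).
  have -> : z ^+ m' = (1 - b 0%N)^-1 * S * z ^+ m' by rewrite eS mulVf // mul1r.
  rewrite /S mulr_sumr mulr_suml; apply: eq_bigr => j _.
  rewrite -!mulrA; congr (_ * (_ * _)).
  by rewrite pow_shift // (leq_trans _ nm).
rewrite ea big_ord_recr /=; apply: IMD.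
  by exists a.
apply: IMV; first exact: IIin.
rewrite ez; apply: IMsum => j.
apply: IMmono; first by apply: IIV.
by move: (ltn_ord j) nm; lia.
Qed.

Lemma noQ N : forall z m n, z != 0 -> (m + n <= N)%N -> IM z m 1 -> IM z^-1 n 1 -> False.
Proof.
have Q0 : forall z, ~ IM z 0 1.
  by move=> z [a [_]]; rewrite big_ord0 => /eqP; rewrite oner_eq0.
elim: N => [|N IH] z m n z0 hmn Qz Qw.
  by case: m hmn Qz => [_ /Q0 //|m]; rewrite addSn.
case: m hmn Qz => [_ /Q0 //|m] hmn Qz.
case: n hmn Qw => [_ /Q0 //|n] hmn Qw.
case: (leqP n m) => h.
  apply: (IH z m n.+1 z0); [by move: hmn; lia | exact: step Qz Qw h | done].
have Qz' : IM z^-1^-1 m.+1 1 by rewrite invrK.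
have Qw' := step (invr_neq0 z0) Qw Qz' (ltnW h).
apply: (IH z^-1 n m.+1 (invr_neq0 z0)); [by move: hmn; lia | done | by rewrite invrK].
Qed.

Lemma dich z : z != 0 -> V z \/ V z^-1.
Proof.
move=> z0; apply: NNPP => /not_or_and [Nz Nzi].
have Q : forall w, ~ V w -> exists m, IM w m 1.
  move=> w Nw; have [g [Hg ex]] := Vmax Nw.
  exists (size g), (fun i => y * g`_i); split.
    by move=> i; exists g`_i.
  rewrite -(mulVf x0) -/y ex horner_coef mulr_sumr.
  by apply: eq_bigr => i _; rewrite mulrA.
have [m Qz] := Q _ Nz; have [n Qw] := Q _ Nzi.
exact: (@noQ (m + n) z m n z0 (leqnn _) Qz Qw).
Qed.

End Loc.

Section ZornPart.
Variables (K : fieldType) (p : nat) (p0 : (0 < p)%N) (hchar : (p%:R : K) = 0).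

Lemma const0 : is_constant (0 : K).
Proof.
exists 'X; split; first exact: monicX.
split; last by rewrite /root hornerX.
by move=> i; rewrite coefX; exists (i == 1)%N.
Qed.

Lemma exists_val (x : K) : x != 0 -> ~ adj (@Zr K) x^-1 x -> exists V, is_prime_of V /\ ~ V x.
Proof.
move=> x0 Nadj.
set y := x^-1.
pose good (A : K -> Prop) := [/\ subring A, A y & ~ A x].
pose PP (A : set K) := (forall t, ~ A t) \/ good A.
have gd : forall A t, PP A -> A t -> good A by move=> A t [h|//] /h.
have [V [PV Vmax]] : exists A : set K, PP A /\ (forall B : set K, (A `<` B)%classic -> ~ PP B).
  apply: Zorn_bigcup => F FP Ftot.
  case: (classic (exists X, F X /\ exists t, X t)) => [[X0 [FX0 [t0 X0t]]]|none]; last first.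
    by left => t [X FX Xt]; apply: none; exists X; split => //; exists t.
  right.
  have big2 : forall X1 X2 a b, F X1 -> F X2 -> X1 a -> X2 b ->
      exists X, [/\ F X, good X, X a & X b].
    move=> X1 X2 a b F1 F2 X1a X2b.
    case: (Ftot X1 X2 F1 F2) => h.
      by exists X2; split => //; [apply: (gd _ b (FP _ F2))|apply: h].
    by exists X1; split => //; [apply: (gd _ a (FP _ F1))|apply: h].
  have [[H1 _ _] Hy _] := gd _ _ (FP _ FX0) X0t.
  split.
  - split.
    + by exists X0.
    + move=> a b [X1 F1 X1a] [X2 F2 X2b].
      have [X [FX [HX _ _] Xa Xb]] := big2 _ _ _ _ F1 F2 X1a X2b.
      by exists X => //; apply: (srB HX).
    + move=> a b [X1 F1 X1a] [X2 F2 X2b].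
      have [X [FX [HX _ _] Xa Xb]] := big2 _ _ _ _ F1 F2 X1a X2b.
      by exists X => //; apply: (srM HX).
  - by exists X0.
  - by move=> [X FX Xx]; have [_ _] := gd _ _ (FP _ FX) Xx.
have gA0 : good (adj (@Zr K) y).
  split; first exact: (adj_subring (@Zr_subring K)).
    exact: (adj_z (@Zr_subring K)).
  by [].
have gV : good V.
  case: PV => // emp; exfalso.
  apply: (Vmax (adj (@Zr K) y)); last by right.
  split; first by move=> t /emp.
  move=> h; apply: (emp 1); apply: h.
  by apply: adj_sub; [exact: (@Zr_subring K)|exact: (sr1 (@Zr_subring K))].
have [HV Vy Nx] := gV.
have Vmx : forall z, ~ V z -> adj V z x.
  move=> z Nz; apply: NNPP => Na.
  apply: (Vmax (adj V z)); last by right; split; [exact: adj_subring|apply: adj_sub|].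
  split; first by move=> t; apply: adj_sub.
  by move=> h; apply: Nz; apply: h; apply: adj_z.
exists V; split => //.
split => //; try by case: HV.
  by exists x.
exact: (dich x0 HV Vy Nx Vmx).
Qed.
End ZornPart.


Lemma char_ext (p : nat) (pp : prime p) (K : fieldExtType (Fpt p)) : (p%:R : K) = 0.
Proof.
have h : (p%:R : {poly 'F_p}) = 0 by rewrite -polyC_natr pchar_Fp_0.
have hF : (p%:R : Fpt p) = 0.
  by rewrite /Fpt -(rmorph_nat (@tofrac _)) h rmorph0.
by rewrite -scaler_nat hF scale0r.
Qed.

Section CharP.
Variables (K : fieldType) (p : nat) (pp : prime p) (hchar : (p%:R : K) = 0).

Lemma natr_mod a : (a%:R : K) = (a %% p)%:R.
Proof. by rewrite {1}(divn_eq a p) natrD natrM hchar mulr0 add0r. Qed.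

Lemma natinv n : (n%:R : K) != 0 -> exists k, (n%:R : K)^-1 = k%:R.
Proof.
move=> n0; exists (n ^ (p - 2))%N.
have hp : (n ^ p)%:R = (n%:R : K) by rewrite natr_mod fermat_little // -natr_mod.
have p2 : (2 <= p)%N by apply: prime_gt1.
rewrite natrX; apply: (mulIf n0); rewrite mulVf //.
apply: (mulIf n0); rewrite mul1r -mulrA -expr2 -exprD subnK //.
by rewrite -natrX hp.
Qed.

Lemma alg_const (P : {poly K}) c : P != 0 -> (forall i, Zr P`_i) -> root P c -> is_constant c.
Proof.
move=> P0 HP rc.
have HZ := @Zr_subring K.
have l0 : lead_coef P != 0 by rewrite lead_coef_eq0.
have [n en] : exists n, lead_coef P = n%:R.
  have [k ->] : Zr (lead_coef P) by rewrite lead_coefE.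
  exact: int_nat (prime_gt0 pp) hchar k.
have l0n : (n%:R : K) != 0 by rewrite -en.
have [k ek] := natinv l0n.
exists ((lead_coef P)^-1 *: P); split; [|split].
- by rewrite monicE lead_coefZ mulVf.
- move=> i; rewrite coefZ en ek.
  have [m ->] : Zr (k%:R * P`_i) by apply: (srM HZ) => //; apply: (srn HZ).
  exact: int_nat (prime_gt0 pp) hchar m.
- by rewrite /root hornerZ (eqP rc) mulr0.
Qed.

Lemma unit_const (Vinf : K -> Prop) (Hinf : is_prime_of Vinf) u : u != 0 ->
  ring_O Vinf u -> ring_O Vinf u^-1 -> is_constant u.
Proof.
move=> u0 Ou Oui; apply: NNPP => Nc.
have adj1 : ~ adj (@Zr K) u^-1 u.
  by move=> h; apply: Nc; apply: (Zr_const (prime_gt0 pp) hchar u0).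
have adj2 : ~ adj (@Zr K) u^-1^-1 u^-1.
  rewrite invrK => [[g [Hg e]]]; apply: Nc.
  apply: (@alg_const ('X * g - 1)).
  - apply/eqP => /(congr1 (fun q : {poly K} => q`_0)).
    rewrite coefB coefXM coef0 coefC /= sub0r => /eqP; rewrite oppr_eq0 oner_eq0 //.
  - move=> i; rewrite coefB coefXM coefC.
    have HZ := @Zr_subring K.
    apply: (srB HZ); first by case: (i == 0)%N => //; apply: (sr0 HZ).
    by case: (i == 0)%N; [apply: (sr1 HZ)|apply: (sr0 HZ)].
  - by rewrite /root hornerD hornerN hornerM hornerX hornerC -e mulfV // subrr.
have [V1 [P1 N1]] := exists_val u0 adj1.
have [V2 [P2 N2]] := exists_val (invr_neq0 u0) adj2.
have S1 : same_prime V1 Vinf by apply: NNPP => h; apply: N1; apply: Ou.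
have S2 : same_prime V2 Vinf by apply: NNPP => h; apply: N2; apply: Oui.
have [] := vdich Hinf u0.
  by move/(S1 u).
by move/(S2 u^-1).
Qed.
End CharP.


Lemma size_fibers (T U : eqType) (g : T -> U) (C : seq U) (t : seq T) :
  uniq C -> (forall b, b \in t -> g b \in C) ->
  size t = (\sum_(c <- C) count (fun b => g b == c) t)%N.
Proof.
move=> uC; elim: t => [|b t IH] h /=.
  by rewrite big1.
rewrite big_split /= -IH; last by move=> b' hb'; apply: h; rewrite inE hb' orbT.
rewrite -big_mkcond sum1_count /=.
have := count_uniq_mem (g b) uC; rewrite h ?mem_head // => e.
have -> : count (eq_op (g b)) C = 1%N by rewrite -[1%N]/(nat_of_bool true) -e; apply: eq_count => c; rewrite /= eq_sym.
by rewrite add1n.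
Qed.

Section Iter.
Variables (K : fieldType) (phi : {poly K}).
Let f := fun y : K => phi.[y].

Lemma per_mul x n : iter n f x = x -> forall k, iter (k * n) f x = x.
Proof. by move=> h; elim=> [//|k IH]; rewrite mulSn iterD IH h. Qed.

Lemma per_iter x k : is_periodic phi x -> is_periodic phi (iter k f x).
Proof.
move=> [n [n0 h]]; exists n; split => //.
by rewrite -iterD addnC iterD h.
Qed.
End Iter.

Section Cycle.
Variables (K : fieldType) (Vinf : K -> Prop) (phi : {poly K}) (d : nat).
Variables (Hd : (2 <= d)%N) (Hsize : size phi = d.+1)
  (HO : forall i, ring_O Vinf phi`_i) (Hlead : ring_O Vinf (lead_coef phi)^-1).

Lemma per_O x : is_periodic phi x -> ring_O Vinf x.
Proof.
move=> Px V HV NV.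
by apply: (per_in_V HV Hd Hsize) => // [i|]; [apply: HO|apply: Hlead].
Qed.

Lemma per_sep a b : is_periodic phi a -> is_periodic phi b -> a != b ->
  forall k, iter k (fun y => phi.[y]) b - iter k (fun y => phi.[y]) a != 0.
Proof.
move=> Pa Pb ab.
pose f := fun y : K => phi.[y].
have [na [na0 Ha]] := Pa; have [nb [nb0 Hb]] := Pb.
set N := (na * nb)%N.
have N0 : (0 < N)%N by rewrite muln_gt0 na0.
have HaN : iter N f a = a by rewrite /N mulnC; apply: per_mul.
have HbN : iter N f b = b by apply: per_mul.
move=> k; rewrite subr_eq0; apply/negP => /eqP e.
move/negP: ab; apply; apply/eqP.
have hk : (k <= k * N)%N by rewrite leq_pmulr.
rewrite -(per_mul HaN k) -(per_mul HbN k) -(subnK hk) !iterD.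
by rewrite -/f e.
Qed.

Lemma cycle_unit a b : is_periodic phi a -> is_periodic phi b -> a != b ->
  forall V, is_prime_of V -> ~ same_prime V Vinf ->
  V ((phi.[b] - phi.[a]) / (b - a)) /\ V ((b - a) / (phi.[b] - phi.[a])).
Proof.
move=> Pa Pb ab V HV NV.
have HS := prime_subring HV.
pose f := fun y : K => phi.[y].
have [na [na0 Ha]] := Pa; have [nb [nb0 Hb]] := Pb.
set N := (na * nb)%N.
have N0 : (0 < N)%N by rewrite muln_gt0 na0.
have HaN : iter N f a = a by rewrite /N mulnC; apply: per_mul.
have HbN : iter N f b = b by apply: per_mul.
pose D k := iter k f b - iter k f a.
have Dnz : forall k, D k != 0.
  move=> k; rewrite subr_eq0; apply/negP => /eqP e.
  move/negP: ab; apply; apply/eqP.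
  have hk : (k <= k * N)%N by rewrite leq_pmulr.
  rewrite -(per_mul HaN k) -(per_mul HbN k) -(subnK hk) !iterD.
  by congr iter.
have VA : forall k, V (iter k f a).
  by move=> k; apply: (per_O (per_iter k Pa)).
have VB : forall k, V (iter k f b).
  by move=> k; apply: (per_O (per_iter k Pb)).
have stp : forall k, V (D k.+1 / D k).
  move=> k; rewrite /D !iterS.
  apply: (divdiff HS) => //.
    by move=> i; apply: HO.
  by rewrite eq_sym -subr_eq0; apply: Dnz.
split; first exact: (stp 0%N).
have ch : forall j, V (D j.+1 / D 1%N).
  elim=> [|j IH]; first by rewrite divff //; apply: (sr1 HS).
  have -> : D j.+2 / D 1%N = (D j.+2 / D j.+1) * (D j.+1 / D 1%N).
    by field; rewrite (Dnz j.+1) (Dnz 1%N).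
  exact: (srM HS).
have := ch N.-1; rewrite prednK // /D HaN HbN.
by [].
Qed.
End Cycle.

Unset Implicit Arguments.

Theorem theorem2p5 (p : nat) (p_prime : prime p)
  (K : fieldExtType (Fpt p))
  (Vinf : K -> Prop) (Hinf : is_prime_of Vinf)
  (consts : seq K) (Hcu : uniq consts)
  (Hc : forall x, x \in consts <-> is_constant x)
  (phi : {poly K}) (d : nat) (Hd : (2 <= d)%N) (Hsize : size phi = d.+1)
  (HO : forall i, ring_O Vinf phi`_i)
  (Hlead : ring_O Vinf (lead_coef phi)^-1)
  (s : seq K) (Hsu : uniq s) (Hper : forall x, x \in s -> is_periodic phi x) :
  (size s <= (size consts).-1 * d.-1 + 1)%N.
Proof.
have hchar := char_ext p_prime K.
case: s Hsu Hper => [|a t0] Hsu Hper; first by [].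
move: Hsu => /andP [at0 ut0].
have Pa := Hper a (mem_head _ _).
have [Psi ePsi] : exists Psi, phi - (phi.[a])%:P = Psi * ('X - a%:P).
  by apply/factor_theorem; rewrite /root hornerD hornerN hornerC subrr.
have hs : size (phi - (phi.[a])%:P) = d.+1.
  rewrite size_polyDl Hsize // size_polyN size_polyC.
  by case: (_ != 0) => /=; lia.
have Psi0 : Psi != 0 by apply: contra_eq_neq hs => h; rewrite ePsi h mul0r size_poly0.
have sPsi : size Psi = d.
  move: hs; rewrite ePsi size_mul ?polyXsubC_eq0 // size_XsubC addn2 /=.
  by case.
have ePsib : forall b, b != a -> Psi.[b] = (phi.[b] - phi.[a]) / (b - a).
  move=> b ba; move: (congr1 (fun q => q.[b]) ePsi).
  rewrite /= hornerD hornerN hornerC hornerM hornerXsubC => ->.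
  by rewrite mulfK // subr_eq0.
set C := [seq c <- consts | c != 0].
have Hfib : forall b, b \in t0 -> Psi.[b] \in C.
  move=> b bt.
  have ba : b != a by apply: contraNneq at0 => <-.
  have Pb : is_periodic phi b by apply: Hper; rewrite inE bt orbT.
  have ab : a != b by rewrite eq_sym.
  have Hu := cycle_unit Hd Hsize HO Hlead Pa Pb ab.
  have D0 : b - a != 0 by rewrite subr_eq0.
  have D1 : phi.[b] - phi.[a] != 0.
    by have := per_sep Pa Pb ab 1%N.
  rewrite mem_filter ePsib // mulf_neq0 ?invr_eq0 //=.
  apply/Hc; apply: (unit_const p_prime hchar Hinf).
  - by rewrite mulf_neq0 ?invr_eq0.
  - by move=> V HV NV; have [] := Hu V HV NV.
  - by rewrite invf_div => V HV NV; have [] := Hu V HV NV.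
have sC : size C = (size consts).-1.
  rewrite size_filter.
  have := count_predC (pred1 0) consts.
  have := count_uniq_mem 0 Hcu.
  have -> : (0 : K) \in consts by apply/Hc; apply: const0.
  move=> -> <- /=; rewrite add0n.
  by apply: eq_count => c.
have fib : forall c, (count (fun b => Psi.[b] == c) t0 <= d.-1)%N.
  move=> c; rewrite -size_filter.
  have sz : size (Psi - c%:P) = d.
    rewrite size_polyDl sPsi // size_polyN size_polyC.
    by case: (_ != 0) => /=; lia.
  have nz : Psi - c%:P != 0 by rewrite -size_poly_eq0 sz; lia.
  have := max_poly_roots nz _ (filter_uniq _ ut0); rewrite sz.
  move=> h; rewrite -ltnS (ltn_predK Hd); apply: h.
  apply/allP => b; rewrite mem_filter => /andP [/eqP e _].
  by rewrite /root hornerD hornerN hornerC e subrr.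
rewrite /= (size_fibers (filter_uniq _ Hcu) Hfib) -sC addn1 ltnS.
apply: leq_trans; first by apply: leq_sum => c _; exact: fib.
by rewrite big_const_seq count_predT iter_addn_0 mulnC.
Qed.
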